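(* A cubic graph $H$ that is $2$-connected but not $3$-connected can be decomposed, via the $H$-decomposition along nontrivial $2$-edge cuts, into a collection of cubic loopless graphs $\{H_i\}$ each of which is $3$-connected.
   Context: Graphs are finite; multiple edges allowed, loops not. For a cubic graph $G$ with a $2$-edge cut $E_C=\{s_{11}s_{21},s_{12}s_{22}\}$ (the $s_{1j}$ on one side, the $s_{2j}$ on the other), let $G_1',G_2'$ be the subgraphs induced on the two sides of $G\setminus E_C$, and let $G_i$ be $G_i'$ with the edge $s_{i1}s_{i2}$ added; we write $G=G_1\,H\,G_2$. The cut is nontrivial if $G_1$ and $G_2$ each have fewer vertices than $G$. Decomposing via $H$ means repeatedly replacing a graph in the collection (starting from $\{H\}$) by the two graphs $G_1,G_2$ arising from a nontrivial $2$-edge cut of it. *)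

(* Defs.v *)
From mathcomp Require Import all_boot.
From Stdlib Require Import Relations.

Set Implicit Arguments.
Unset Strict Implicit.
Unset Printing Implicit Defensive.

(* A finite multigraph: a duplicate-free list of vertex labels (naturals) and a
   list of edges (multiset of unordered pairs, each stored as an ordered pair;
   a pair (v,v) would be a loop).  Keeping the original labels makes the
   split into G_1, G_2 canonical (no relabelling needed). *)
Record mgraph := MGraph { gV : seq nat ; gE : seq (nat * nat) }.

Definition well_formed (G : mgraph) : Prop :=
  uniq (gV G) /\ forall e, e \in gE G -> (e.1 \in gV G) /\ (e.2 \in gV G).

Definition loopless (G : mgraph) : Prop :=
  forall e, e \in gE G -> e.1 != e.2.

(* degree; a loop would count twice *)
Definition deg (G : mgraph) (v : nat) : nat :=
  count (fun e : nat * nat => e.1 == v) (gE G) + count (fun e : nat * nat => e.2 == v) (gE G).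

Definition cubic (G : mgraph) : Prop := forall v, v \in gV G -> deg G v = 3.

Definition adj (E : seq (nat * nat)) (u v : nat) : Prop :=
  ((u, v) \in E) \/ ((v, u) \in E).

Definition connected (G : mgraph) : Prop :=
  (0 < size (gV G)) /\
  forall u v, u \in gV G -> v \in gV G -> clos_refl_trans nat (adj (gE G)) u v.

Definition delete_edges (G : mgraph) (I : seq nat) : mgraph :=
  MGraph (gV G) [seq nth (0, 0) (gE G) i | i <- iota 0 (size (gE G)) & i \notin I].

Definition k_edge_connected (k : nat) (G : mgraph) : Prop :=
  1 < size (gV G) /\ forall I : seq nat, size I < k -> connected (delete_edges G I).

Definition cross (G : mgraph) (S : seq nat) : seq (nat * nat) :=
  [seq e <- gE G | (e.1 \in S) != (e.2 \in S)].

Definition orient (S : seq nat) (e : nat * nat) : nat * nat :=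
  if e.1 \in S then e else (e.2, e.1).

Definition side1 (G : mgraph) (S : seq nat) : seq nat := [seq v <- gV G | v \in S].
Definition side2 (G : mgraph) (S : seq nat) : seq nat := [seq v <- gV G | v \notin S].

Definition G1' (G : mgraph) (S : seq nat) : mgraph :=
  MGraph (side1 G S) [seq e <- gE G | (e.1 \in S) && (e.2 \in S)].
Definition G2' (G : mgraph) (S : seq nat) : mgraph :=
  MGraph (side2 G S) [seq e <- gE G | (e.1 \notin S) && (e.2 \notin S)].

(* with cut edges c1 = s11 s21, c2 = s12 s22 (s1j in S), G_1 = G_1' + s11 s12 and
   G_2 = G_2' + s21 s22 *)
Definition G1 (G : mgraph) (S : seq nat) : mgraph :=
  let c1 := orient S (nth (0, 0) (cross G S) 0) in
  let c2 := orient S (nth (0, 0) (cross G S) 1) in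
  MGraph (gV (G1' G S)) ((c1.1, c2.1) :: gE (G1' G S)).
Definition G2 (G : mgraph) (S : seq nat) : mgraph :=
  let c1 := orient S (nth (0, 0) (cross G S) 0) in
  let c2 := orient S (nth (0, 0) (cross G S) 1) in
  MGraph (gV (G2' G S)) ((c1.2, c2.2) :: gE (G2' G S)).

Definition two_edge_cut (G : mgraph) (S : seq nat) : Prop :=
  size (cross G S) = 2 /\ connected (G1' G S) /\ connected (G2' G S).

Definition nontrivial_two_edge_cut (G : mgraph) (S : seq nat) : Prop :=
  two_edge_cut G S /\
  size (gV (G1 G S)) < size (gV G) /\ size (gV (G2 G S)) < size (gV G).

Inductive decomp_step : seq mgraph -> seq mgraph -> Prop :=
| DStep (C1 C2 : seq mgraph) (G : mgraph) (S : seq nat) :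
    nontrivial_two_edge_cut G S ->
    decomp_step (C1 ++ G :: C2) (C1 ++ G1 G S :: G2 G S :: C2).

Definition decomposes_into (H : mgraph) (C : seq mgraph) : Prop :=
  clos_refl_trans (seq mgraph) decomp_step [:: H] C.

(* Main.v *)
Require Import Defs.
From mathcomp Require Import all_boot.
From Stdlib Require List.
From mathcomp Require Import zify.
From Stdlib Require Import Relations ClassicalEpsilon Classical.

Set Implicit Arguments.
Unset Strict Implicit.
Unset Printing Implicit Defensive.


Definition del (l : seq (nat * nat)) (I : seq nat) :=
  [seq nth (0, 0) l i | i <- iota 0 (size l) & i \notin I].

Lemma delete_edgesE G I : delete_edges G I = MGraph (gV G) (del (gE G) I).
Proof. by []. Qed.

Definition rt (E : seq (nat * nat)) := clos_refl_trans nat (adj E).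

Lemma adj_sym E x y : adj E x y -> adj E y x.
Proof. by case=> H; [right|left]. Qed.

Lemma rt_sym E x y : rt E x y -> rt E y x.
Proof.
elim=> [a b /adj_sym H|a|a b c _ H1 _ H2]; first by apply: rt_step.
- exact: rt_refl.
- exact: rt_trans H2 H1.
Qed.

Lemma rt_mono (E1 E2 : seq (nat * nat)) x y :
  {subset E1 <= E2} -> rt E1 x y -> rt E2 x y.
Proof.
move=> sub; elim=> [a b H|a|a b c _ H1 _ H2].
- by apply: rt_step; case: H => H; [left|right]; apply: sub.
- exact: rt_refl.
- exact: rt_trans H1 H2.
Qed.

Lemma rt_edge E x y : (x, y) \in E -> rt E x y.
Proof. by move=> H; apply: rt_step; left. Qed.

Lemma rt_edge' E x y : (y, x) \in E -> rt E x y.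
Proof. by move=> H; apply: rt_step; right. Qed.

Definition crossP (P : pred nat) (e : nat * nat) := P e.1 != P e.2.

Lemma walk_cross (P : pred nat) E x y : rt E x y -> P x -> ~~ P y ->
  exists e, e \in E /\ crossP P e.
Proof.
move=> /clos_rt_rt1n_iff; elim=> [a -> //|a b c Hab _ IH Pa Pc].
case Pb: (P b); first exact: IH.
case: Hab => H.
- by exists (a, b); rewrite /crossP /= Pa Pb.
- by exists (b, a); rewrite /crossP /= Pa Pb.
Qed.

Lemma transfer (Q : pred nat) E' E x y : rt E' x y ->
  (forall z, rt E' x z -> Q z) -> {subset E' <= E} ->
  rt [seq e <- E | Q e.1 && Q e.2] x y.
Proof.
move=> /clos_rt_rtn1_iff H HQ sub; elim: H => [|b c Hbc Hxb IH]; first exact: rt_refl.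
have Qb : Q b by apply: HQ; apply/clos_rt_rtn1_iff.
have Qc : Q c.
  apply: HQ; apply: rt_trans (rt_step _ _ _ _ Hbc); exact/clos_rt_rtn1_iff.
apply: rt_trans IH _; case: Hbc => H.
- by apply: rt_edge; rewrite mem_filter /= Qb Qc sub.
- by apply: rt_edge'; rewrite mem_filter /= Qb Qc sub.
Qed.

Lemma mem_del l I g : g \in del l I ->
  exists r, [/\ r < size l, r \notin I & nth (0, 0) l r = g].
Proof.
case/mapP=> r; rewrite mem_filter mem_iota add0n => /andP [rI /andP [_ rl]] ->.
by exists r.
Qed.

Lemma del_mem l I r : r < size l -> r \notin I -> nth (0, 0) l r \in del l I.
Proof.
by move=> rl rI; apply: map_f; rewrite mem_filter mem_iota rI rl.
Qed.

Lemma count_nth_iota T (x0 : T) (Q : pred T) l :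
  count Q l = count (fun i => Q (nth x0 l i)) (iota 0 (size l)).
Proof.
by rewrite -[in LHS](take_size l) -(map_nth_iota0 x0 (leqnn _)) count_map.
Qed.

Lemma count_split T (Q A : pred T) s :
  count Q s = count (fun x => A x && Q x) s + count (fun x => ~~ A x && Q x) s.
Proof.
elim: s => //= x s ->; case: (A x); case: (Q x) => /=; rewrite ?addnS ?addSn //.
Qed.

Lemma count_eq_and (s : seq nat) p (b : bool) : uniq s -> p \in s ->
  count (fun i => (i == p) && b) s = b.
Proof.
move=> us ps; case: b.
- rewrite (eq_count (a2 := pred1 p)) ?count_uniq_mem ?ps // => i; by rewrite andbT.
- by rewrite (eq_count (a2 := pred0)) ?count_pred0 // => i; rewrite andbF.
Qed.

Lemma count_del1 (Q : pred (nat * nat)) l p : p < size l ->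
  count Q (del l [:: p]) + Q (nth (0, 0) l p) = count Q l.
Proof.
move=> pl; rewrite [RHS](count_nth_iota (0, 0)) /del count_map count_filter.
rewrite [RHS](count_split _ (fun i => i != p)); congr (_ + _).
  by apply: eq_count => i /=; rewrite inE andbC.
rewrite (eq_count (a2 := fun i => (i == p) && Q (nth (0, 0) l p))).
  by rewrite count_eq_and ?iota_uniq // mem_iota.
by move=> i /=; rewrite negbK; case: eqP => // ->.
Qed.

Lemma del_nil l : del l [::] = l.
Proof.
rewrite /del (eq_filter (a2 := predT)) ?filter_predT //.
by rewrite (map_nth_iota0 _ (leqnn _)) take_size.
Qed.

Lemma del_out l p : size l <= p -> del l [:: p] = l.
Proof.
move=> pl; rewrite /del (eq_in_filter (a2 := predT)) ?filter_predT.
  by rewrite (map_nth_iota0 _ (leqnn _)) take_size.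
move=> i; rewrite mem_iota add0n inE /= => il; apply/eqP=> ip.
by move: il; rewrite ip ltnNge pl.
Qed.

Lemma mem_count (T : eqType) (g : T) l : (g \in l) = (0 < count (pred1 g) l).
Proof. by rewrite -has_count has_pred1. Qed.




Definition endP (P : pred nat) (c : nat * nat) := if P c.1 then c.1 else c.2.
Definition inc (a : nat) (e : nat * nat) := (e.1 == a) || (e.2 == a).
Definition CL G P := [seq e <- gE G | crossP P e].
Definition SE G P := [seq e <- gE G | P e.1 && P e.2].
Definition c0 G P := nth (0, 0) (CL G P) 0.
Definition c1 G P := nth (0, 0) (CL G P) 1.
Definition Gside G P := MGraph [seq v <- gV G | P v]
  ((endP P (c0 G P), endP P (c1 G P)) :: SE G P).
Definition good G := [/\ well_formed G, loopless G, cubic G & k_edge_connected 2 G].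
Definition cutok G P := [/\ size (CL G P) = 2,
  connected (MGraph [seq v <- gV G | P v] (SE G P)) &
  exists w, w \in gV G /\ ~~ P w].

Lemma CL_eq (G:mgraph) (P:pred nat) : size (CL G P) = 2 -> CL G P = [:: c0 G P; c1 G P].
Proof. rewrite /c0 /c1; case: (CL G P) => [|x [|y [|z s]]] //=. Qed.

Lemma endP_P P c : crossP P c -> P (endP P c).
Proof. rewrite /crossP /endP; case: ifP => // /negbT; rewrite /negb; case: (P c.2) => //. Qed.

Lemma endP_cases P c a : crossP P c -> endP P c = a ->
  (c.1 = a /\ ~~ P c.2) \/ (c.2 = a /\ ~~ P c.1).
Proof.
rewrite /crossP /endP; case: (P c.1); case: (P c.2) => //= _ ->; by [left|right].
Qed.

Lemma endP_inc P c : inc (endP P c) c.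
Proof. by rewrite /inc /endP; case: (P c.1); rewrite eqxx ?orbT. Qed.

Lemma endP_eq P c w : crossP P c -> P w ->
  (c.1 == w) + (c.2 == w) = (endP P c == w).
Proof.
rewrite /crossP /endP; case P1: (P c.1); case P2: (P c.2) => //= _ Pw.
- rewrite (_ : (c.2 == w) = false) ?addn0 //; apply/eqP => E; move: P2; by rewrite E Pw.
- rewrite (_ : (c.1 == w) = false) ?add0n //; apply/eqP => E; move: P1; by rewrite E Pw.
Qed.

Lemma deg_loopless G a : loopless G -> deg G a = count (inc a) (gE G).
Proof.
move=> ll; rewrite /deg -[RHS]addn0.
have <- : count (fun e : nat * nat => (e.1 == a) && (e.2 == a)) (gE G) = 0.
  apply/eqP; rewrite -leqn0 leqNgt -has_count; apply/hasP => -[e eE /andP[/eqP e1 /eqP e2]].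
  by move: (ll e eE); rewrite e1 e2 eqxx.
by rewrite -count_predUI.
Qed.

Lemma endP_V G P c : well_formed G -> c \in gE G -> endP P c \in gV G.
Proof. by case=> _ H /H [h1 h2]; rewrite /endP; case: ifP. Qed.

Lemma CL_mem G P c : c \in CL G P -> c \in gE G /\ crossP P c.
Proof. by rewrite mem_filter => /andP[]. Qed.

Lemma c01_mem G P : size (CL G P) = 2 ->
  (c0 G P \in gE G /\ crossP P (c0 G P)) /\ (c1 G P \in gE G /\ crossP P (c1 G P)).
Proof.
move=> s2; split; apply: CL_mem; rewrite (CL_eq s2) inE ?eqxx //.
by rewrite inE eqxx orbT.
Qed.


Lemma ec_del1 G r : k_edge_connected 2 G -> connected (MGraph (gV G) (del (gE G) [:: r])).
Proof. by case=> _ H; apply: (H [:: r]). Qed.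

Lemma count_CL_split G P (Q : pred (nat * nat)) :
  (forall e, Q e -> crossP P e || (P e.1 && P e.2)) ->
  count Q (gE G) = count Q (CL G P) + count Q (SE G P).
Proof.
move=> HQ; rewrite /CL /SE !count_filter (count_split Q (crossP P)).
congr (_ + _); apply: eq_count => e /=; rewrite andbC //.
case Qe: (Q e); rewrite ?andbF ?andbT //.
move: (HQ e Qe); rewrite /crossP; case: (P e.1); case: (P e.2) => //.
Qed.

Lemma bridge G P : good G -> cutok G P -> endP P (c0 G P) != endP P (c1 G P).
Proof.
case=> wf ll cu ec [s2 _ [w [wV Pw]]].
have [[c0E c0C] [c1E c1C]] := c01_mem s2.
apply/eqP => ea; set a := endP P (c0 G P) in ea.
have Pa : P a by apply: endP_P.
have aV : a \in gV G by apply: endP_V.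
have deg3 : count (inc a) (gE G) = 3 by rewrite -deg_loopless // cu.
have cnt2 : count (inc a) (CL G P) = 2.
  by rewrite (CL_eq s2) /= endP_inc ea endP_inc.
have cnt1 : count (fun e => ~~ crossP P e && inc a e) (gE G) = 1.
  move: deg3; rewrite (count_split _ (crossP P)).
  suff -> : count (fun x => crossP P x && inc a x) (gE G) = 2 by lia.
  by rewrite -cnt2 /CL count_filter; apply: eq_count => e; rewrite /= andbC.
have : has (fun e => ~~ crossP P e && inc a e) (gE G) by rewrite has_count cnt1.
case/hasP => f fE /andP [fC fa].
set r := index f (gE G).
have rs : r < size (gE G) by rewrite index_mem.
have nr : nth (0, 0) (gE G) r = f by rewrite nth_index.
set c := if f.1 == a then f.2 else f.1.
have [Pc ca cV] : [/\ P c, c != a & c \in gV G].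
  move: fC fa (ll f fE) (wf.2 f fE); rewrite /c /crossP /inc.
  case: (f.1 =P a) => [e1|ne] /=.
  - move=> fC' _ nf [_ f2V]; split => //; first by move: fC'; rewrite e1 Pa; case: (P f.2).
    by rewrite eq_sym -e1.
  - move=> fC' /eqP f2 _ [h _]; split => //; last by apply/eqP.
    by move: fC'; rewrite f2 Pa; case: (P f.1).
have := (ec_del1 r ec).2 c w cV wV.
move/(walk_cross (P := fun z => P z && (z != a))).
rewrite Pc ca (negbTE Pw) => /(_ isT isT) [g [gD gC]].
have [r' [r's _ nr']] := mem_del gD.
have gEG : g \in gE G by rewrite -nr' mem_nth.
case Cg: (crossP P g).
- have : g \in CL G P by rewrite mem_filter Cg gEG.
  rewrite (CL_eq s2) !inE => /orP [] /eqP eg.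
  + have ega : endP P g = a by rewrite eg.
    case: (endP_cases Cg ega) => [[g1 Pg2]|[g2 Pg1]]; move: gC; rewrite /crossP ?g1 ?g2 eqxx.
    * by rewrite (negbTE Pg2) !andbF.
    * by rewrite (negbTE Pg1) !andbF.
  + have ega : endP P g = a by rewrite eg; exact: esym ea.
    case: (endP_cases Cg ega) => [[g1 Pg2]|[g2 Pg1]]; move: gC; rewrite /crossP ?g1 ?g2 eqxx.
    * by rewrite (negbTE Pg2) !andbF.
    * by rewrite (negbTE Pg1) !andbF.
- case Ig: (inc a g).
  + have := count_del1 (fun e => ~~ crossP P e && inc a e) rs.
    rewrite cnt1 nr fC fa => H.
    have : has (fun e => ~~ crossP P e && inc a e) (del (gE G) [:: r]).
      by apply/hasP; exists g => //; rewrite Cg Ig.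
    by move/eqP: H; rewrite addn1 eqSS has_count => /eqP ->.
  + move: Ig gC Cg; rewrite /inc /crossP => /norP [g1 g2].
    by rewrite g1 g2 !andbT => ->.
Qed.


Lemma Gside_wf G P : good G -> cutok G P -> well_formed (Gside G P).
Proof.
move=> hG hP; case: hG hP => wf ll cu ec [s2 _ _].
have [[c0E c0C] [c1E c1C]] := c01_mem s2.
split; first by rewrite filter_uniq //; case: wf.
move=> e; rewrite inE => /orP [/eqP -> /=|].
- by rewrite !mem_filter !endP_P // !(endP_V _ wf).
- rewrite mem_filter => /andP [/andP [P1 P2] eE].
  by have [h1 h2] := wf.2 e eE; rewrite !mem_filter P1 P2 h1 h2.
Qed.

Lemma Gside_loopless G P : good G -> cutok G P -> loopless (Gside G P).
Proof.
move=> hG hP e; rewrite inE => /orP [/eqP -> /=|]; first exact: bridge.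
by case: hG => _ ll _ _; rewrite mem_filter => /andP [_ /ll].
Qed.

Lemma Gside_size G P : cutok G P -> size (gV (Gside G P)) < size (gV G).
Proof.
case=> _ _ [w [wV Pw]]; rewrite /= size_filter -(count_predC P (gV G)).
have : 0 < count (predC P) (gV G) by rewrite -has_count; apply/hasP; exists w.
move: (count _ _) (count _ _) => m n; clear; lia.
Qed.

Lemma Gside_cubic G P : good G -> cutok G P -> cubic (Gside G P).
Proof.
move=> hG hP; case: hG hP => wf ll cu ec [s2 _ _].
have [[c0E c0C] [c1E c1C]] := c01_mem s2.
move=> w; rewrite mem_filter => /andP [Pw wV].
have := cu w wV; rewrite /deg /=.
have sp : forall Q : pred (nat * nat), (forall e, Q e -> P e.1 || P e.2) ->
    count Q (gE G) = count Q (CL G P) + count Q (SE G P).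
  move=> Q HQ; apply: count_CL_split => e /HQ; rewrite /crossP.
  by case: (P e.1); case: (P e.2).
rewrite (sp (fun e => e.1 == w)); last by move=> e /eqP ->; rewrite Pw.
rewrite (sp (fun e => e.2 == w)); last by move=> e /eqP ->; rewrite Pw orbT.
rewrite (CL_eq s2) /= -(endP_eq c0C Pw) -(endP_eq c1C Pw).
move: (_ == w) (_ == w) (_ == w) (_ == w) (count _ _) (count _ _) => a b c d m n.
clear; lia.
Qed.


Lemma rtT E x y z : rt E x y -> rt E y z -> rt E x z.
Proof. exact: rt_trans. Qed.
Lemma rtS E x y : adj E x y -> rt E x y.
Proof. exact: rt_step. Qed.

Lemma two_distinct (s : seq nat) x y : x \in s -> y \in s -> x != y -> 1 < size s.
Proof.
case: s => [|z [|z' s]] //; rewrite !inE => /eqP -> /eqP ->; by rewrite eqxx.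
Qed.

Lemma adj_edge E b c : adj E b c -> exists g, g \in E /\ (g = (b, c) \/ g = (c, b)).
Proof. by case=> H; [exists (b, c)|exists (c, b)]; split => //; [left|right]. Qed.

Lemma adj_of E b c g : g \in E -> (g = (b, c) \/ g = (c, b)) -> adj E b c.
Proof. by move=> gE [] ?; subst g; [left|right]. Qed.

Lemma endP_pair (P : pred nat) (u v : nat) : P u -> ~~ P v -> endP P (u, v) = u /\ endP P (v, u) = u.
Proof. by rewrite /endP /= => -> /negbTE ->. Qed.

Lemma Gside_ec G P : good G -> cutok G P -> k_edge_connected 2 (Gside G P).
Proof.
move=> hG hP; have wfS := Gside_wf hG hP.
have bri := bridge hG hP.
case: hG => wf ll cu ec; case: hP => s2 cs [w [wV Pw]].
have [[c0E c0C] [c1E c1C]] := c01_mem s2.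
set a0 := endP P (c0 G P); set a1 := endP P (c1 G P).
have a0V : a0 \in [seq v <- gV G | P v] by rewrite mem_filter endP_P // endP_V.
have a1V : a1 \in [seq v <- gV G | P v] by rewrite mem_filter endP_P // endP_V.
split; first exact: two_distinct a0V a1V bri.
set E1 := (a0, a1) :: SE G P.
have subSE : {subset SE G P <= E1} by move=> g gS; rewrite inE gS orbT.
have conn_full : connected (MGraph [seq v <- gV G | P v] E1).
  by split; [exact: cs.1| move=> u v uV vV; apply: rt_mono subSE _; exact: cs.2].
case=> [|p [|q I]] //= _; rewrite delete_edgesE /=.
  by rewrite del_nil.
case: (leqP (size E1) p) => pl; first by rewrite del_out.
case: p pl => [|k] pl.
  split; first exact: cs.1.
  move=> u v uV vV; apply: rt_mono _ (cs.2 u v uV vV) => g gS.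
  have := @del_mem E1 [:: 0] (index g (SE G P)).+1.
  by rewrite /= nth_index // => -> //; rewrite ltnS index_mem.
(* main case: deleting an edge of SE *)
have ks : k < size (SE G P) by [].
set f := nth (0, 0) (SE G P) k.
have fS : f \in SE G P by rewrite mem_nth.
have [fP fE] : (P f.1 && P f.2) /\ f \in gE G by move: fS; rewrite mem_filter => /andP.
set r := index f (gE G).
have rs : r < size (gE G) by rewrite index_mem.
have nr : nth (0, 0) (gE G) r = f by rewrite nth_index.
set Er := del (gE G) [:: r].
set E1p := del E1 [:: k.+1].
have HA : forall g, g \in Er -> P g.1 -> P g.2 -> g \in E1p.
  move=> g gEr P1 P2.
  have h1 := count_del1 (pred1 g) rs; rewrite nr in h1.
  have h2 := count_del1 (pred1 g) pl.
  rewrite (_ : nth (0, 0) E1 k.+1 = f) // -/E1p in h2.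
  have h4 : count (pred1 g) E1 = ((a0, a1) == g) + count (pred1 g) (SE G P) by [].
  have h3 : count (pred1 g) (SE G P) = count (pred1 g) (gE G).
    rewrite /SE count_filter; apply: eq_count => e /=.
    by case: eqP => // ->; rewrite P1 P2.
  rewrite mem_count; move: gEr; rewrite mem_count -/Er => c1p.
  rewrite -/Er in h1; move: h1 h2 h3 h4 c1p. move: (pred1 g f : nat) (((a0, a1) == g) : nat) => b b2. move: (count_mem g Er) (count_mem g E1p) (count_mem g E1) (count_mem g (SE G P)) (count_mem g (gE G)). clear; lia.
have HB : forall g, g \in Er -> crossP P g -> g = c0 G P \/ g = c1 G P.
  move=> g /mem_del [r' [r's _ nr']] Cg.
  have : g \in CL G P by rewrite mem_filter Cg -nr' mem_nth.
  by rewrite (CL_eq s2) !inE => /orP [] /eqP ->; [left|right].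
have HC : (a0, a1) \in E1p by have := @del_mem E1 [:: k.+1] 0; rewrite /= => ->.
have a01 : rt E1p a0 a1 by apply: rt_edge.
split; first exact: cs.1.
move=> x y; rewrite mem_filter => /andP [Px xV] yV.
have cl : forall z, rt Er x z -> (P z -> rt E1p x z) /\ (~~ P z -> rt E1p x a0).
  move=> z /clos_rt_rtn1_iff; elim=> [|b c Hbc _ [IH1 IH2]].
    by split => [_|]; [apply: rt_refl|rewrite Px].
  have [g [gEr go]] := adj_edge Hbc.
  have Cgbc : crossP P g = (P b != P c) by case: go => ->; rewrite /crossP //= eq_sym.
  case Pb: (P b); case Pc: (P c); split => // _.
  - have gA : g \in E1p by apply: HA gEr _ _; case: go => ->.
    exact: rtT (IH1 Pb) (rtS (adj_of gA go)).
  - have Cg : crossP P g by rewrite Cgbc Pb Pc.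
    have [e1 e2] := endP_pair (P := P) Pb (negbT Pc).
    have eb : endP P g = b by case: go => ->.
    case: (HB g gEr Cg) => eg; move: eb; rewrite eg -/a0 -/a1 => eb; subst b.
    + exact: IH1 Pb.
    + exact: rtT (IH1 Pb) (rt_sym a01).
  - have Cg : crossP P g by rewrite Cgbc Pb Pc.
    have [e1 e2] := endP_pair (P := P) Pc (negbT Pb).
    have ec' : endP P g = c by case: go => ->.
    case: (HB g gEr Cg) => eg; move: ec'; rewrite eg -/a0 -/a1 => ec'; subst c.
    + exact: IH2 (negbT Pb).
    + exact: rtT (IH2 (negbT Pb)) a01.
  - exact: IH2 (negbT Pb).
apply: (cl y _).1; first by have := (ec_del1 r ec).2 x y xV; apply; move: yV; rewrite mem_filter => /andP[].
by move: yV; rewrite mem_filter => /andP[].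
Qed.


Definition reachb E u w : bool :=
  if excluded_middle_informative (rt E u w) then true else false.

Lemma reachbP E u w : reflect (rt E u w) (reachb E u w).
Proof. rewrite /reachb; case: excluded_middle_informative => h; by constructor. Qed.

Lemma rt_V G E x z : well_formed G -> {subset E <= gE G} -> rt E x z ->
  x \in gV G -> z \in gV G.
Proof.
move=> wf sub /clos_rt_rtn1_iff; elim=> // b c Hbc _ IH /IH bV.
have [g [gE go]] := adj_edge Hbc.
by have [h1 h2] := wf.2 g (sub g gE); case: go => ?; subst g.
Qed.

Lemma rt_edgeg E (g : nat * nat) : g \in E -> rt E g.1 g.2.
Proof. by case: g => a b; apply: rt_edge. Qed.

Lemma count_two (s : seq nat) p q : uniq s -> p \in s -> q \in s -> p != q ->
  count (fun r => (r == p) || (r == q)) s = 2.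
Proof.
move=> us ps qs pq.
have := count_predUI (pred1 p) (pred1 q) s.
rewrite (eq_count (a2 := pred0) (a1 := predI _ _)); last first.
  by move=> r /=; case: eqP => // ->; rewrite (negbTE pq).
rewrite count_pred0 addn0 !count_uniq_mem // ps qs => h; rewrite -[2]/(true + true) -h.
by apply: eq_count.
Qed.

Lemma find_cut G : good G -> ~ k_edge_connected 3 G ->
  exists S : seq nat, cutok G (fun v => v \in S) /\ cutok G (fun v => v \notin S).
Proof.
move=> hG nk3; case: (hG) => wf ll cu [sz ec].
have [I [sI nc]] : exists I : seq nat, size I < 3 /\ ~ connected (delete_edges G I).
  apply: NNPP => H; apply: nk3; split => // I sI.
  by apply: NNPP => nc; apply: H; exists I.
set E := gE G; set V := gV G.
set J := [seq i <- undup I | i < size E].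
have dIJ : del E I = del E J.
  rewrite /del; congr map; apply: eq_in_filter => i; rewrite mem_iota add0n => /andP [_ il].
  by rewrite mem_filter mem_undup il.
have uJ : uniq J by rewrite filter_uniq // undup_uniq.
have sJ : size J <= 2.
  have := size_undup I; rewrite /J size_filter.
  have := count_size (fun i => i < size E) (undup I); move: sI; move: (count _ _) (size (undup I)) (size I) => a b c; clear; lia.
have [p [q [eJ pq pE qE]]] : exists p q, [/\ J = [:: p; q], p != q, p < size E & q < size E].
  move: nc; rewrite delete_edgesE -/E dIJ.
  have Jm : forall i, i \in J -> i < size E by move=> i; rewrite mem_filter => /andP[].
  move: sJ uJ Jm; case Je: J => [|p [|q [|r J']]] //=.
  - by move=> _ _ _ []; have := ec [::] isT; rewrite delete_edgesE.
  - by move=> _ _ _ []; have := ec [:: p] isT.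
  - move=> _; rewrite andbT inE => pq Jm _; exists p, q; split => //.
    + by apply: Jm; rewrite inE eqxx.
    + by apply: Jm; rewrite !inE eqxx orbT.
have {}nc : ~ connected (MGraph V (del E [:: p; q])) by rewrite -eJ -dIJ.
set E' := del E [:: p; q].
have subE' : {subset E' <= E} by move=> g /mem_del [r [rs _ <-]]; rewrite mem_nth.
have [u [v [uV vV nuv]]] : exists u v, [/\ u \in V, v \in V & ~ rt E' u v].
  apply: NNPP => H; apply: nc; split; first exact: ltnW sz.
  move=> u v uV vV; apply: NNPP => nr; apply: H; by exists u, v.
set S := [seq w <- V | reachb E' u w].
have memS : forall w, w \in V -> (w \in S) = reachb E' u w.
  by move=> w wV; rewrite mem_filter wV andbT.
have uS : u \in S by rewrite memS //; apply/reachbP; apply: rt_refl.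
have vS : v \notin S by rewrite memS //; apply/reachbP.
have F1 : forall g, g \in E' -> ~~ crossP (fun w => w \in S) g.
  move=> g gE'; have [g1 g2] := wf.2 g (subE' g gE').
  rewrite /crossP negbK !memS //; apply/eqP; apply/idP/idP => /reachbP h; apply/reachbP.
  - by apply: rtT h (rt_edgeg gE').
  - by apply: rtT h (rt_sym (rt_edgeg gE')).
have Fpos : forall r, r < size E -> crossP (fun w => w \in S) (nth (0, 0) E r) -> (r == p) || (r == q).
  move=> r rs Cr; apply: (contraTT _ Cr) => h; apply: F1; apply: del_mem => //; by rewrite !inE.
have F3 : forall p' q', [:: p'; q'] = [:: p; q] \/ [:: p'; q'] = [:: q; p] ->
    crossP (fun w => w \in S) (nth (0, 0) E q').
  move=> p' q' hpq.
  have := (ec [:: p'] isT).2 u v uV vV; rewrite delete_edgesE -/E.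
  move/(walk_cross (P := fun w => w \in S)) => /(_ uS vS) [g [gD Cg]].
  have [r [rs rp nr]] := mem_del gD.
  have := Fpos r rs; rewrite nr => /(_ Cg); rewrite inE in rp.
  case: hpq => -[? ?]; subst p' q'.
  - by rewrite (negbTE rp) /= => /eqP <-; rewrite nr.
  - by rewrite (negbTE rp) orbF => /eqP <-; rewrite nr.
have Cq := F3 p q (or_introl erefl).
have Cp := F3 q p (or_intror erefl).
have sCL : size (CL G (fun v => v \in S)) = 2.
  rewrite /CL size_filter (count_nth_iota (0, 0)) -/E.
  rewrite -(@count_two (iota 0 (size E)) p q) ?iota_uniq ?mem_iota //.
  apply: eq_in_count => r; rewrite mem_iota add0n => /andP [_ rs] /=.
  apply/idP/idP => [/(Fpos r rs) //|/orP [] /eqP -> //].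
have EV : forall x z, rt E' x z -> x \in V -> z \in V.
  by move=> x z; apply: rt_V.
set eq' := nth (0, 0) E q.
set b := if eq'.1 \in S then eq'.2 else eq'.1.
have eqE : eq' \in E by rewrite mem_nth.
have bV : b \in V by have [h1 h2] := wf.2 eq' eqE; rewrite /b; case: ifP.
have bS : b \notin S.
  rewrite /b; move: Cq; rewrite /crossP -/eq'; case: ifP => h1 //.
  by rewrite h1.
have toB : forall w, rt (del E [:: p]) w u -> w \notin S -> rt E' w b.
  move=> w /clos_rt_rt1n_iff H; move: H uS.
  elim=> [x xS /negP //|x y z Hxy _ IH uS' xS].
  have [g [gD go]] := adj_edge Hxy.
  have [r [rs rp nr]] := mem_del gD; rewrite inE in rp.
  case yS: (y \in S).
  - have Cg : crossP (fun w => w \in S) g by case: go => ->; rewrite /crossP /= yS (negbTE xS).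
    move: (Fpos r rs); rewrite nr => /(_ Cg); rewrite (negbTE rp) /= => /eqP er.
    have gq : g = eq' by rewrite -nr er.
    suff -> : b = x by apply: rt_refl.
    by rewrite /b -gq; case: go => -> /=; rewrite ?yS ?(negbTE xS).
  - have Cg : ~~ crossP (fun w => w \in S) g by case: go => ->; rewrite /crossP /= yS (negbTE xS).
    have rq : r != q by apply: contraNneq Cg => rq; rewrite -nr rq.
    have gE' : g \in E' by rewrite -nr; apply: del_mem => //; rewrite !inE negb_or rp rq.
    exact: rtT (rtS (adj_of gE' go)) (IH uS' (negbT yS)).
exists S; split; split => //.
- split; first by rewrite size_filter -has_count; apply/hasP; exists u.
  move=> x y; rewrite mem_filter => /andP [xS xV]; rewrite mem_filter => /andP [yS yV].
  move: (xS) (yS); rewrite !memS // => /reachbP ux /reachbP uy.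
  apply: transfer (rtT (rt_sym ux) uy) _ subE' => z xz.
  by rewrite memS; [apply/reachbP; exact: rtT ux xz | exact: EV xz xV].
- by exists v.
- by rewrite /CL (eq_filter (a2 := crossP (fun w => w \in S))) // => e; rewrite /crossP /=; case: (e.1 \in S); case: (e.2 \in S).
- split; first by rewrite size_filter -has_count; apply/hasP; exists v.
  move=> x y; rewrite mem_filter => /andP [xS xV]; rewrite mem_filter => /andP [yS yV].
  have ec1 := (ec [:: p] isT).2; rewrite delete_edgesE -/E in ec1.
  have xb := toB x (ec1 x u xV uV) xS.
  have yb := toB y (ec1 y u yV uV) yS.
  apply: transfer (rtT xb (rt_sym yb)) _ subE' => z xz.
  apply/negP => zS; move/negP: xS; apply; rewrite memS //; apply/reachbP.
  move: zS; rewrite memS ?(EV _ _ xz xV) // => /reachbP uz.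
  exact: rtT uz (rt_sym xz).
- by exists u; split => //; rewrite negbK.
Qed.


Lemma G1E G S : G1 G S = Gside G (fun v => v \in S).
Proof. by rewrite /G1 /Gside /orient /endP /c0 /c1 /CL; case: ifP; case: ifP. Qed.

Lemma CL2 G S : CL G (fun v => v \notin S) = cross G S.
Proof.
rewrite /CL /cross; apply: eq_filter => e; rewrite /crossP /=.
by case: (e.1 \in S); case: (e.2 \in S).
Qed.

Lemma G2E G S : G2 G S = Gside G (fun v => v \notin S).
Proof.
rewrite /G2 /Gside /c0 /c1 CL2 /orient /endP.
by case: ifP; case: ifP.
Qed.

Lemma step_ctx A B X Y : decomp_step A B -> decomp_step (X ++ A ++ Y) (X ++ B ++ Y).
Proof.
case=> C1 C2 G S h; have := DStep (X ++ C1) (C2 ++ Y) h.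
by rewrite -!catA /=.
Qed.

Lemma rt_ctx A B X Y : clos_refl_trans _ decomp_step A B ->
  clos_refl_trans _ decomp_step (X ++ A ++ Y) (X ++ B ++ Y).
Proof.
elim=> [a b H|a|a b c _ H1 _ H2].
- by apply: rt_step; apply: step_ctx.
- exact: rt_refl.
- exact: rt_trans H1 H2.
Qed.

Lemma main_ind n : forall G, size (gV G) <= n -> good G ->
  exists C : seq mgraph, decomposes_into G C /\
    (forall Hi, List.In Hi C -> cubic Hi /\ loopless Hi /\ k_edge_connected 3 Hi).
Proof.
elim: n => [|n IH] G sz hG.
  by case: hG => _ _ _ [h _]; move: h sz; case: (size (gV G)).
case: (classic (k_edge_connected 3 G)) => k3.
  exists [:: G]; split; first exact: rt_refl.
  by move=> Hi [<-|[]]; case: hG.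
have [S [h1 h2]] := find_cut hG k3.
have g1 : good (Gside G (fun v => v \in S)).
  by split; [apply: Gside_wf|apply: Gside_loopless|apply: Gside_cubic|apply: Gside_ec].
have g2 : good (Gside G (fun v => v \notin S)).
  by split; [apply: Gside_wf|apply: Gside_loopless|apply: Gside_cubic|apply: Gside_ec].
have s1 := Gside_size h1; have s2 := Gside_size h2.
have [C1 [d1 p1]] := IH _ (ltnSE (leq_trans s1 sz)) g1.
have [C2 [d2 p2]] := IH _ (ltnSE (leq_trans s2 sz)) g2.
exists (C1 ++ C2); split.
- have nt : nontrivial_two_edge_cut G S.
    case: h1 => c1 con1 _; case: h2 => _ con2 _.
    split; first by split; [exact: c1|split; [exact: con1|exact: con2]].
    by rewrite G1E G2E; split.
  apply: rt_trans (_ : clos_refl_trans _ decomp_step _ [:: G1 G S; G2 G S]) _.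
    by apply: rt_step; have := DStep [::] [::] nt.
  rewrite G1E G2E.
  apply: rt_trans (_ : clos_refl_trans _ decomp_step _ (C1 ++ [:: Gside G (fun v => v \notin S)])) _.
    exact: (@rt_ctx _ _ [::] [:: Gside G (fun v => v \notin S)] d1).
  by have := @rt_ctx _ _ C1 [::] d2; rewrite /= !cats0.
- move=> Hi /(@List.in_app_or _ C1 C2 Hi) [h|h]; [exact: p1 h|exact: p2 h].
Qed.

Theorem theorem3 (H : mgraph) :
  well_formed H -> loopless H -> cubic H ->
  k_edge_connected 2 H -> ~ k_edge_connected 3 H ->
  exists C : seq mgraph,
    decomposes_into H C /\
    (forall Hi, List.In Hi C -> cubic Hi /\ loopless Hi /\ k_edge_connected 3 Hi).
Proof.
move=> wf ll cu ec _.
exact: (@main_ind (size (gV H)) H (leqnn _) (And4 wf ll cu ec)).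
Qed.
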